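(* Let $T$, $\mathcal{S}=\mathcal{S}_+\cup\mathcal{S}_-$, $\Psi$, $U$, $\lambda$ and $P_\lambda$ be as in the context. Consider the discrete-time QBD with phase space $\mathcal{S}$ and transition blocks $$A_{-1}=\begin{bmatrix}0&0\\0&(I-\lambda^{-1}U)^{-1}\end{bmatrix},\quad A_0=\begin{bmatrix}0&P_{\lambda+-}\\0&0\end{bmatrix},\quad A_1=\begin{bmatrix}P_{\lambda++}&0\\0&0\end{bmatrix}.$$ Then its $\mathcal{G}$-matrix is $$\mathcal{G}_A=\begin{bmatrix}0&\Psi\\0&(I-\lambda^{-1}U)^{-1}\end{bmatrix}.$$
   Context: $T$ is the generator of a continuous-time Markov chain on a finite set $\mathcal{S}=\mathcal{S}_+\cup\mathcal{S}_-$ (disjoint, both nonempty), partitioned into blocks $T_{++},T_{+-},T_{-+},T_{--}$ according to $\mathcal{S}_\pm$. $\Psi$ is the minimal nonnegative solution of $T_{+-}+\Psi T_{--}+T_{++}\Psi+\Psi T_{-+}\Psi=0$ (the first-return probability matrix of the unit-rate fluid queue with phase generator $T$, rates $+1$ on $\mathcal{S}_+$ and $-1$ on $\mathcal{S}_-$), and $U:=T_{--}+T_{-+}\Psi$. $\lambda>0$ satisfies $\lambda\ge\max_i|T_{ii}|$, and $P_\lambda:=I+\lambda^{-1}T$ with blocks $P_{\lambda++}$ etc. A discrete-time quasi-birth-death process (QBD) with transition blocks $L_{-1},L_0,L_1$ is a Markov chain $\{(Y_n,\kappa_n)\}$ on $\mathbb{Z}\times\mathcal{S}$ with $\mathbb{P}[Y_n=k+d,\kappa_n=j\mid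 Y_{n-1}=k,\kappa_{n-1}=i]=(L_d)_{ij}$ for $d\in\{-1,0,1\}$. Its $\mathcal{G}$-matrix has entries $\mathcal{G}_{ij}=\mathbb{P}[\theta<\infty,\kappa_\theta=j\mid Y_0=k,\kappa_0=i]$, where $\theta=\inf\{n>0:Y_n=k-1\}$. All matrices are partitioned into blocks according to $\mathcal{S}_+,\mathcal{S}_-$. *)

(* Defs.v *)
From HB Require Import structures.
From mathcomp Require Import all_boot all_order all_algebra.
From mathcomp Require Import classical_sets reals topology normedtype sequences.
Set Implicit Arguments. Unset Strict Implicit. Unset Printing Implicit Defensive.
Import Order.TTheory GRing.Theory Num.Theory.
Import numFieldNormedType.Exports.
Local Open Scope ring_scope.
Local Open Scope classical_set_scope.

Section Defs.
Variable R : realType.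

Definition is_generator (m : nat) (T : 'M[R]_m) : Prop :=
  (forall i j, i != j -> 0 <= T i j) /\ (forall i, \sum_j T i j = 0).

Definition mx_nonneg (m n : nat) (X : 'M[R]_(m, n)) : Prop :=
  forall i j, 0 <= X i j.

(* The matrix Riccati equation
   T_{+-} + X T_{--} + T_{++} X + X T_{-+} X = 0,
   with blocks of T w.r.t. S_+ = first p indices, S_- = last q indices. *)
Definition riccati (p q : nat) (T : 'M[R]_(p + q)) (X : 'M[R]_(p, q)) : Prop :=
  ursubmx T + X *m drsubmx T + ulsubmx T *m X + X *m dlsubmx T *m X = 0.

Definition is_min_nonneg_sol (p q : nat) (Pr : 'M[R]_(p, q) -> Prop)
  (X : 'M[R]_(p, q)) : Prop :=
  [/\ Pr X, mx_nonneg X &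
      forall Y, Pr Y -> mx_nonneg Y -> forall i j, X i j <= Y i j].

(* A level increment is encoded by d : 'I_3, meaning d - 1 in {-1,0,1}. *)
Definition incr (d : 'I_3) : int := (nat_of_ord d)%:Z - 1.

Definition qbd_step (m : nat) (Lm1 L0 L1 : 'M[R]_m) (d : 'I_3) : 'M[R]_m :=
  if nat_of_ord d == 0%N then Lm1 else if nat_of_ord d == 1%N then L0 else L1.

Definition path_mx (m : nat) (Lm1 L0 L1 : 'M[R]_m) (s : seq 'I_3) : 'M[R]_m :=
  foldr (fun d M => qbd_step Lm1 L0 L1 d *m M) 1%:M s.

Definition first_passage (s : seq 'I_3) : bool :=
  (\sum_(d <- s) incr d == -1) &&
  all (fun t => \sum_(d <- take t s) incr d != -1) (iota 1 (size s).-1).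

(* (fp n)_{ij} = P[theta = n, kappa_theta = j | Y_0 = k, kappa_0 = i]. *)
Definition first_passage_mx (m : nat) (Lm1 L0 L1 : 'M[R]_m) (n : nat) : 'M[R]_m :=
  \sum_(s : n.-tuple 'I_3 | first_passage s) path_mx Lm1 L0 L1 s.

(* G is the G-matrix: G_{ij} = P[theta < oo, kappa_theta = j | ...]
   = sum_{n >= 0} P[theta = n, kappa_theta = j | ...]. *)
Definition is_G_matrix (m : nat) (Lm1 L0 L1 G : 'M[R]_m) : Prop :=
  forall i j,
    (fun N : nat => \sum_(n < N) first_passage_mx Lm1 L0 L1 n i j) @ \oo --> G i j.

End Defs.

(* Main.v *)
Require Import Defs.
From HB Require Import structures.
From mathcomp Require Import all_boot all_order all_algebra.
From mathcomp Require Import classical_sets reals topology normedtype sequences.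
From mathcomp Require Import boolp zify lra.
Import Order.TTheory GRing.Theory Num.Theory.
Import numFieldNormedType.Exports.
Local Open Scope ring_scope.
Local Open Scope classical_set_scope.

Section Lim.
Variable R : realType.
Implicit Types u v : nat -> R.

Lemma cvg_sumr (I : eqType) (r : seq I) (f : I -> nat -> R) (a : I -> R) :
  (forall i, f i n @[n --> \oo] --> a i) ->
  (\sum_(i <- r) f i n) @[n --> \oo] --> \sum_(i <- r) a i.
Proof.
move=> H; elim: r => [|x r IH].
  have -> : (fun n => \sum_(i <- [::]) f i n) = (fun=> 0) by apply/funext => n; rewrite big_nil.
  rewrite big_nil; exact: cvg_cst.
have -> : (fun n => \sum_(i <- x :: r) f i n) = (fun n => f x n + \sum_(i <- r) f i n).
  by apply/funext => n; rewrite big_cons.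
rewrite big_cons; exact: cvgD.
Qed.

Lemma mono_lim u B : (forall n, u n <= u n.+1) -> (forall n, u n <= B) ->
  exists l, u @ \oo --> l /\ (forall n, u n <= l) /\ l <= B.
Proof.
move=> inc bnd.
have nd : nondecreasing_seq u.
  by apply/nondecreasing_seqP.
have ub : has_ubound (range u) by exists B => _ [n _ <-].
have cu := nondecreasing_cvgn nd ub.
exists (sup (range u)); split => //; split.
  move=> n; have := nondecreasing_cvgn_le nd (cvgP _ cu) n.
  by rewrite (cvg_lim _ cu).
apply: (ler_cvg_to cu (cvg_cst B)).
by near=> n.
Unshelve. all: by end_near.
Qed.

Lemma lim_le u l B : u @ \oo --> l -> (forall n, u n <= B) -> l <= B.
Proof. move=> cu H; apply: (ler_cvg_to cu (cvg_cst B)); by near=> n. 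
Unshelve. all: by end_near. Qed.

Lemma lim_ge u l B : u @ \oo --> l -> (forall n, B <= u n) -> B <= l.
Proof. move=> cu H; apply: (ler_cvg_to (cvg_cst B) cu); by near=> n. 
Unshelve. all: by end_near. Qed.

Lemma lim_uniq u (l l' : R) : u @ \oo --> l -> u @ \oo --> l' -> l = l'.
Proof.
move=> h1 h2; apply/eqP; rewrite eq_le; apply/andP; split.
  by apply: (ler_cvg_to h1 h2); near=> n.
by apply: (ler_cvg_to h2 h1); near=> n.
Unshelve. all: by end_near. Qed.
End Lim.
Arguments mono_lim {R u B}. Arguments lim_le {R u l B}. Arguments lim_ge {R u l B}. Arguments lim_uniq {R u l l'}.


Definition o0 : 'I_3 := @Ordinal 3 0 isT.
Definition o1 : 'I_3 := @Ordinal 3 1 isT.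
Definition o2 : 'I_3 := @Ordinal 3 2 isT.

Definition t0 (m : nat) : seq 'I_3 := nseq m o2 ++ o1 :: nseq m.+1 o0.

Lemma ord3_cases (d : 'I_3) : [\/ d = o0, d = o1 | d = o2].
Proof.
case: d => [[|[|[|k]]] Hd].
- by constructor 1; apply: val_inj.
- by constructor 2; apply: val_inj.
- by constructor 3; apply: val_inj.
- by [].
Qed.

Lemma sum_nseq (c : nat) (x : 'I_3) :
  \sum_(d <- nseq c x) incr d = (c%:Z * incr x)%R.
Proof.
elim: c => [|c IH]; first by rewrite big_nil mul0r.
by rewrite /= big_cons IH -addn1 PoszD mulrDl mul1r addrC.
Qed.

Lemma sum_t0 m : \sum_(d <- t0 m) incr d = -1.
Proof.
rewrite /t0 big_cat big_cons !sum_nseq /incr /=.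
lia.
Qed.

Lemma fp_t0 m : first_passage (t0 m).
Proof.
apply/andP; split; first by rewrite sum_t0.
apply/allP => t; rewrite mem_iota => /andP [t1].
have -> : size (t0 m) = (m + (m.+1).+1)%N by rewrite /t0 size_cat /= !size_nseq.
rewrite add1n prednK ?addn_gt0 ?orbT // => tle.
rewrite /t0 take_cat size_nseq.
case: ifP => tm.
  rewrite take_nseq ?(ltnW tm) //.
  by rewrite sum_nseq /incr; apply/eqP; rewrite /=; lia.
move/negbT: tm; rewrite -leqNgt => tm.
case E: (t - m)%N => [|k].
  rewrite take0 cats0 sum_nseq /incr /=; apply/eqP; lia.
rewrite take_cons take_nseq; last by lia.
rewrite big_cat big_cons !sum_nseq /incr /=.
apply/eqP; lia.
Qed.

Lemma fp_o0 : first_passage [:: o0].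
Proof. by rewrite /first_passage /= big_cons big_nil. Qed.

Section Shape.
Variables (R : realType) (n : nat) (Lm1 L0 L1 : 'M[R]_n).
Hypotheses (h10 : L1 *m Lm1 = 0) (h01 : L0 *m L1 = 0) (h00 : L0 *m L0 = 0)
  (hm1 : Lm1 *m L1 = 0) (hm0 : Lm1 *m L0 = 0).

Notation path := (path_mx Lm1 L0 L1).

Lemma path_cons d s : path (d :: s) = qbd_step Lm1 L0 L1 d *m path s.
Proof. by []. Qed.

Definition shape3 (s : seq 'I_3) :=
  [\/ exists c, s = nseq c o0, exists a c, s = nseq a o2 ++ o1 :: nseq c o0
    | exists a, s = nseq a o2].

Lemma shapeP s : path s != 0 -> shape3 s.
Proof.
elim: s => [|d s IH].
  by move=> _; constructor 1; exists 0%N.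
rewrite path_cons => nz.
have nzs : path s != 0.
  by apply: contra nz => /eqP ->; rewrite mulmx0.
have zero : forall A B X : 'M[R]_n, A *m B = 0 -> A *m (B *m X) = 0.
  by move=> A B X h; rewrite mulmxA h mul0mx.
case: (ord3_cases d) => Ed; subst d; case: (IH nzs).
- by move=> [c ->]; constructor 1; exists c.+1.
- move=> [[|a] [c E]]; rewrite E in nz.
  + by rewrite /= zero ?eqxx in nz.
  + by rewrite /= zero ?eqxx in nz.
- move=> [[|a] E].
  + by rewrite E; constructor 1; exists 1%N.
  + by rewrite E /= zero ?eqxx in nz.
- by move=> [c ->]; constructor 2; exists 0%N, c.
- move=> [[|a] [c E]]; rewrite E in nz.
  + by rewrite /= zero ?eqxx in nz.
  + by rewrite /= zero ?eqxx in nz.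
- move=> [[|a] E].
  + by rewrite E; constructor 2; exists 0%N, 0%N.
  + by rewrite E /= zero ?eqxx in nz.
- move=> [[|c] E].
  + by rewrite E; constructor 3; exists 1%N.
  + by rewrite E /= zero ?eqxx in nz.
- by move=> [a [c ->]]; constructor 2; exists a.+1, c.
- by move=> [a ->]; constructor 3; exists a.+1.
Qed.

Lemma shape_fp s : \sum_(d <- s) incr d = -1 -> path s != 0 ->
  s = [:: o0] \/ exists m, s = t0 m.
Proof.
move=> hs /shapeP [[c E]|[a [c E]]|[a E]]; rewrite E in hs *.
- left; rewrite sum_nseq /incr /= in hs.
  have -> : c = 1%N by lia.
  by [].
- right; exists a; rewrite big_cat big_cons /= !sum_nseq /incr /= in hs.
  have -> : c = a.+1 by lia.
  by [].
- by rewrite sum_nseq /incr /= in hs; lia.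
Qed.


Definition cand (k : nat) : option (seq 'I_3) :=
  match k with 0 => None | 1 => Some [:: o0]
  | m.+2 => if odd m then None else Some (t0 m./2) end.

Lemma size_t0 m : size (t0 m) = (m.*2).+2.
Proof. rewrite /t0 size_cat /= !size_nseq -addnn. lia. Qed.

Lemma cand_size s : (s = [:: o0] \/ exists m, s = t0 m) -> cand (size s) = Some s.
Proof.
case=> [->|[m ->]] //; rewrite size_t0 /= odd_double.
by rewrite -[(m.*2)./2]/(half (double m)) doubleK.
Qed.

Lemma cand_ok k s : cand k = Some s -> size s = k /\ first_passage s.
Proof.
case: k => [|[|k]] //=; first by case=> <-; split => //; exact: fp_o0.
case: ifP => // ok [<-]; split; last exact: fp_t0.
rewrite size_t0; congr _.+2.
by rewrite -[in RHS](odd_double_half k) ok add0n.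
Qed.

Lemma fp_none k : cand k = None -> first_passage_mx Lm1 L0 L1 k = 0.
Proof.
move=> hc; rewrite /first_passage_mx big1 // => s /andP [/eqP hs _].
apply/eqP; apply: contraT => nz.
have := cand_size _ (shape_fp _ hs nz); by rewrite size_tuple hc.
Qed.

Lemma fp_some k s : cand k = Some s -> first_passage_mx Lm1 L0 L1 k = path s.
Proof.
move=> hc; have [sz fps] := cand_ok _ _ hc.
have sz' : size s == k by rewrite sz.
pose t := @Tuple k _ s sz'.
rewrite /first_passage_mx (bigD1 t) //= big1 ?addr0 // => u /andP [fpu neq].
move: fpu => /andP [/eqP hs _].
apply/eqP; apply: contraT => nz.
have := cand_size _ (shape_fp _ hs nz); rewrite size_tuple hc => -[E].
have ut : u = t by apply: val_inj; rewrite /= E.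
by rewrite ut eqxx in neq.
Qed.

End Shape.


Set Implicit Arguments. Unset Strict Implicit. Unset Printing Implicit Defensive.


Section Mx.
Variable R : realType.

Definition mxle m n (A B : 'M[R]_(m, n)) := forall i j, A i j <= B i j.
Definition mxcvg m n (X : nat -> 'M[R]_(m, n)) (L : 'M[R]_(m, n)) :=
  forall i j, (fun k => X k i j) @ \oo --> L i j.

Section Sz.
Variables m n k : nat.
Implicit Types A B C D : 'M[R]_(m, n).

Lemma mxle_refl A : mxle A A.
Proof. by move=> i j. Qed.

Lemma mxle_trans A B C : mxle A B -> mxle B C -> mxle A C.
Proof. by move=> h1 h2 i j; apply: le_trans (h1 i j) (h2 i j). Qed.

Lemma mxle_add A B C D : mxle A B -> mxle C D -> mxle (A + C) (B + D).
Proof. by move=> h1 h2 i j; rewrite !mxE lerD. Qed.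

Lemma mxle_antisym A B : mxle A B -> mxle B A -> A = B.
Proof. by move=> h1 h2; apply/matrixP => i j; apply/eqP; rewrite eq_le h1 h2. Qed.

Lemma mxle0 A : mxle 0 A <-> mx_nonneg A.
Proof. by split=> h i j; move: (h i j); rewrite ?mxE. Qed.

Lemma mxnn0 : mx_nonneg (0 : 'M[R]_(m, n)).
Proof. by move=> i j; rewrite mxE. Qed.

Lemma mxnn_add A B : mx_nonneg A -> mx_nonneg B -> mx_nonneg (A + B).
Proof. by move=> h1 h2 i j; rewrite mxE addr_ge0. Qed.

Lemma mxle_scale (c : R) A B : 0 <= c -> mxle A B -> mxle (c *: A) (c *: B).
Proof. by move=> c0 h i j; rewrite !mxE ler_wpM2l. Qed.

Lemma mxnn_scale (c : R) A : 0 <= c -> mx_nonneg A -> mx_nonneg (c *: A).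
Proof. by move=> c0 h i j; rewrite mxE mulr_ge0. Qed.

Lemma mxle_mulr A B (C : 'M[R]_(n, k)) : mxle A B -> mx_nonneg C ->
  mxle (A *m C) (B *m C).
Proof.
move=> h hC i j; rewrite !mxE; apply: ler_sum => l _.
by apply: ler_wpM2r.
Qed.

Lemma mxle_mull (C : 'M[R]_(k, m)) A B : mx_nonneg C -> mxle A B ->
  mxle (C *m A) (C *m B).
Proof.
move=> hC h i j; rewrite !mxE; apply: ler_sum => l _.
by apply: ler_wpM2l.
Qed.

Lemma mxnn_mul A (C : 'M[R]_(n, k)) : mx_nonneg A -> mx_nonneg C ->
  mx_nonneg (A *m C).
Proof.
move=> h1 h2 i j; rewrite mxE; apply: sumr_ge0 => l _; exact: mulr_ge0.
Qed.

Lemma mxcvg_cst A : mxcvg (fun=> A) A.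
Proof. move=> i j; exact: cvg_cst. Qed.

Lemma mxcvg_add X Y A B : mxcvg X A -> mxcvg Y B -> mxcvg (fun t => X t + Y t) (A + B).
Proof.
move=> h1 h2 i j; rewrite mxE.
have -> : (fun t => (X t + Y t) i j) = (fun t => X t i j + Y t i j).
  by apply/funext => t; rewrite mxE.
exact: cvgD.
Qed.

Lemma mxcvg_scale (c : R) X A : mxcvg X A -> mxcvg (fun t => c *: X t) (c *: A).
Proof.
move=> h i j; rewrite mxE.
have -> : (fun t => (c *: X t) i j) = (fun t => c * X t i j).
  by apply/funext => t; rewrite mxE.
exact: cvgM (cvg_cst c) (h i j).
Qed.

Lemma mxcvg_mul X (Y : nat -> 'M[R]_(n, k)) A (B : 'M[R]_(n, k)) : mxcvg X A -> mxcvg Y B ->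
  mxcvg (fun t => X t *m Y t) (A *m B).
Proof.
move=> h1 h2 i j; rewrite mxE.
have -> : (fun t => (X t *m Y t) i j) = (fun t => \sum_l X t i l * Y t l j).
  by apply/funext => t; rewrite mxE.
apply: cvg_sumr => l; exact: cvgM (h1 i l) (h2 l j).
Qed.

Lemma mxcvg_shiftS X A : mxcvg (fun t => X t.+1) A -> mxcvg X A.
Proof. by move=> h i j; rewrite -cvg_shiftS; exact: h. Qed.

Lemma mxcvg_shiftS' X A : mxcvg X A -> mxcvg (fun t => X t.+1) A.
Proof. by move=> h i j; have := h i j; rewrite -cvg_shiftS. Qed.

Lemma mxcvg_uniq X A B : mxcvg X A -> mxcvg X B -> A = B.
Proof. by move=> h1 h2; apply/matrixP => i j; exact: lim_uniq (h1 i j) (h2 i j). Qed.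

Lemma mxcvg_le X A B : mxcvg X A -> (forall t, mxle (X t) B) -> mxle A B.
Proof. by move=> h hb i j; apply: (lim_le (h i j)) => t; exact: hb. Qed.

Lemma mxcvg_ge X A B : mxcvg X A -> (forall t, mxle B (X t)) -> mxle B A.
Proof. by move=> h hb i j; apply: (lim_ge (h i j)) => t; exact: hb. Qed.

Lemma mxcvg_mono X B : (forall t, mxle (X t) (X t.+1)) -> (forall t, mxle (X t) B) ->
  exists L, mxcvg X L.
Proof.
move=> inc bnd.
pose L := \matrix_(i, j) sup (range (fun t => X t i j)).
exists L => i j; rewrite mxE.
have [l [hl _]] := mono_lim (fun t => inc t i j) (fun t => bnd t i j).
have nd : nondecreasing_seq (fun t => X t i j) by apply/nondecreasing_seqP => t; exact: inc.
apply: nondecreasing_cvgn => //.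
by exists (B i j) => _ [t _ <-]; exact: bnd.
Qed.

End Sz.
End Mx.

Lemma mxcvg_block (R : realType) m1 m2 n1 n2 (X1 : nat -> 'M[R]_(m1, n1)) (X2 : nat -> 'M[R]_(m1, n2))
  (X3 : nat -> 'M[R]_(m2, n1)) (X4 : nat -> 'M[R]_(m2, n2)) L1 L2 L3 L4 :
  mxcvg X1 L1 -> mxcvg X2 L2 -> mxcvg X3 L3 -> mxcvg X4 L4 ->
  mxcvg (fun N => block_mx (X1 N) (X2 N) (X3 N) (X4 N)) (block_mx L1 L2 L3 L4).
Proof.
move=> h1 h2 h3 h4 i j; rewrite -(splitK i) -(splitK j).
case: (split i) => i'; case: (split j) => j' /=.
- have -> : (fun N => block_mx (X1 N) (X2 N) (X3 N) (X4 N) (lshift m2 i') (lshift n2 j'))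
     = (fun N => X1 N i' j') by apply/funext => N; rewrite block_mxEul.
  by rewrite block_mxEul.
- have -> : (fun N => block_mx (X1 N) (X2 N) (X3 N) (X4 N) (lshift m2 i') (rshift n1 j'))
     = (fun N => X2 N i' j') by apply/funext => N; rewrite block_mxEur.
  by rewrite block_mxEur.
- have -> : (fun N => block_mx (X1 N) (X2 N) (X3 N) (X4 N) (rshift m1 i') (lshift n2 j'))
     = (fun N => X3 N i' j') by apply/funext => N; rewrite block_mxEdl.
  by rewrite block_mxEdl.
- have -> : (fun N => block_mx (X1 N) (X2 N) (X3 N) (X4 N) (rshift m1 i') (rshift n1 j'))
     = (fun N => X4 N i' j') by apply/funext => N; rewrite block_mxEdr.
  by rewrite block_mxEdr.
Qed.

Set Implicit Arguments. Unset Strict Implicit. Unset Printing Implicit Defensive.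

Section Main.
Variables (R : realType) (p q : nat) (T : 'M[R]_(p + q)) (Psi : 'M[R]_(p, q)) (lambda : R).
Hypotheses (hq : (0 < q)%N) (hgen : is_generator T)
  (hmin : is_min_nonneg_sol (@riccati R p q T) Psi) (hl : 0 < lambda)
  (hdiag : forall i, `|T i i| <= lambda).

Definition P : 'M[R]_(p + q) := 1%:M + lambda^-1 *: T.
Definition Ppp := ulsubmx P.
Definition Ppm := ursubmx P.
Definition Pmp := dlsubmx P.
Definition Pmm := drsubmx P.
Definition e n : 'cV[R]_n := const_mx 1.

Lemma P_nn : mx_nonneg P.
Proof.
case: hgen => hoff _ i j; rewrite !mxE.
have li : 0 < lambda^-1 by rewrite invr_gt0.
case: eqP => [<-|/eqP ne] /=.
  have := hdiag i; rewrite ler_norml => /andP [h _].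
  have : - 1 <= lambda^-1 * T i i.
    by rewrite -(mulVf (lt0r_neq0 hl)) -mulrN ler_wpM2l // ltW.
  lra.
by rewrite add0r; apply: mulr_ge0; [exact: ltW | exact: hoff].
Qed.

Lemma P_rows i : \sum_j P i j = 1.
Proof.
case: hgen => _ hrow.
under eq_bigr do rewrite !mxE.
rewrite big_split /= -mulr_sumr hrow mulr0 addr0.
rewrite (bigD1 i) //= eqxx big1 ?addr0 // => j /negbTE.
by rewrite eq_sym => ->.
Qed.

Lemma Ppp_nn : mx_nonneg Ppp.
Proof. move=> i j; have := P_nn (lshift q i) (lshift q j); by rewrite -{1}[P]submxK block_mxEul. Qed.
Lemma Ppm_nn : mx_nonneg Ppm.
Proof. move=> i j; have := P_nn (lshift q i) (rshift p j); by rewrite -{1}[P]submxK block_mxEur. Qed.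
Lemma Pmp_nn : mx_nonneg Pmp.
Proof. move=> i j; have := P_nn (rshift p i) (lshift q j); by rewrite -{1}[P]submxK block_mxEdl. Qed.
Lemma Pmm_nn : mx_nonneg Pmm.
Proof. move=> i j; have := P_nn (rshift p i) (rshift p j); by rewrite -{1}[P]submxK block_mxEdr. Qed.

Lemma rows_p : Ppp *m e p + Ppm *m e q = e p.
Proof.
apply/matrixP => i j; rewrite !mxE -(P_rows (lshift q i)) big_split_ord.
by congr (_ + _); apply: eq_bigr => k _; rewrite !mxE mulr1.
Qed.

Lemma rows_m : Pmp *m e p + Pmm *m e q = e q.
Proof.
apply/matrixP => i j; rewrite !mxE -(P_rows (rshift p i)) big_split_ord.
by congr (_ + _); apply: eq_bigr => k _; rewrite !mxE mulr1.
Qed.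

Lemma Pblock : P = block_mx (1%:M + lambda^-1 *: ulsubmx T) (lambda^-1 *: ursubmx T)
   (lambda^-1 *: dlsubmx T) (1%:M + lambda^-1 *: drsubmx T).
Proof.
rewrite /P -{1}(submxK T) (scalar_mx_block p q) scale_block_mx add_block_mx.
by rewrite !add0r.
Qed.

Lemma Ppp_E : Ppp = 1%:M + lambda^-1 *: ulsubmx T.
Proof. by rewrite /Ppp Pblock block_mxKul. Qed.
Lemma Ppm_E : Ppm = lambda^-1 *: ursubmx T.
Proof. by rewrite /Ppm Pblock block_mxKur. Qed.
Lemma Pmp_E : Pmp = lambda^-1 *: dlsubmx T.
Proof. by rewrite /Pmp Pblock block_mxKdl. Qed.
Lemma Pmm_E : Pmm = 1%:M + lambda^-1 *: drsubmx T.
Proof. by rewrite /Pmm Pblock block_mxKdr. Qed.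

Definition G (Y : 'M[R]_(p, q)) := Ppm + Y *m Pmm + Ppp *m Y + Y *m Pmp *m Y.

Lemma ric_scale Y : lambda^-1 *: (ursubmx T + Y *m drsubmx T + ulsubmx T *m Y
    + Y *m dlsubmx T *m Y) = G Y - Y *+ 2.
Proof.
rewrite /G Ppp_E Ppm_E Pmp_E Pmm_E !scalerDr.
rewrite mulmxDr mulmxDl mulmx1 mul1mx.
rewrite -?scalemxAr -?scalemxAl -?scalemxAr.
move: (lambda^-1 *: ursubmx T) (lambda^-1 *: (Y *m drsubmx T))
  (lambda^-1 *: (ulsubmx T *m Y)) (lambda^-1 *: (Y *m dlsubmx T *m Y)) => a b c d.
apply/matrixP => i j; rewrite !mxE /=; lra.
Qed.

Lemma ricE Y : riccati T Y <-> G Y = Y *+ 2.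
Proof.
rewrite /riccati; split => h.
  by apply/eqP; rewrite -subr_eq0 -ric_scale h scaler0.
have := ric_scale Y; rewrite h subrr => /eqP.
rewrite scaler_eq0 invr_eq0 (negbTE (lt0r_neq0 hl)) /= => /eqP //.
Qed.



Lemma eq_mxle m n (A B : 'M[R]_(m, n)) : A = B -> mxle A B.
Proof. by move=> ->; exact: mxle_refl. Qed.

Lemma G_nn Y : mx_nonneg Y -> mx_nonneg (G Y).
Proof.
move=> hY; rewrite /G.
apply: mxnn_add; last by apply: mxnn_mul (mxnn_mul hY Pmp_nn) hY.
apply: mxnn_add; last exact: mxnn_mul Ppp_nn hY.
apply: mxnn_add; first exact: Ppm_nn.
exact: mxnn_mul hY Pmm_nn.
Qed.

Lemma mxle_nn m n (Y Z : 'M[R]_(m, n)) : mx_nonneg Y -> mxle Y Z -> mx_nonneg Z.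
Proof. by move=> h1 h2 i j; apply: le_trans (h1 i j) (h2 i j). Qed.

Lemma G_mono Y Z : mx_nonneg Y -> mxle Y Z -> mxle (G Y) (G Z).
Proof.
move=> hY hYZ; have hZ := mxle_nn hY hYZ; rewrite /G.
apply: mxle_add; last first.
  apply: (@mxle_trans _ _ _ _ (Y *m Pmp *m Z)).
    exact: mxle_mull (mxnn_mul hY Pmp_nn) hYZ.
  apply: mxle_mulr => //; exact: mxle_mulr hYZ Pmp_nn.
apply: mxle_add; last exact: mxle_mull Ppp_nn hYZ.
apply: mxle_add; first exact: mxle_refl.
exact: mxle_mulr hYZ Pmm_nn.
Qed.

Lemma half2 m n (Y : 'M[R]_(m, n)) : 2^-1 *: (Y *+ 2) = Y.
Proof. by rewrite -[Y *+ 2]scaler_nat scalerA mulVf ?scale1r // pnatr_eq0. Qed.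

Fixpoint Xit k : 'M[R]_(p, q) := if k is k'.+1 then 2^-1 *: G (Xit k') else 0.

Lemma Xit_nn k : mx_nonneg (Xit k).
Proof.
elim: k => [|k IH] /=; first exact: mxnn0.
by apply: mxnn_scale; [rewrite invr_ge0 | exact: G_nn].
Qed.

Lemma Xit_inc k : mxle (Xit k) (Xit k.+1).
Proof.
elim: k => [|k IH]; first by apply/mxle0; exact: Xit_nn.
rewrite [Xit k.+2]/=; rewrite [Xit k.+1]/=.
apply: mxle_scale; first by rewrite invr_ge0.
by apply: G_mono => //; exact: Xit_nn.
Qed.

Lemma Xit_below Y k : mx_nonneg Y -> mxle (G Y) (Y *+ 2) -> mxle (Xit k) Y.
Proof.
move=> hY hG; elim: k => [|k IH]; first by apply/mxle0.
rewrite /= -(half2 Y); apply: mxle_scale; first by rewrite invr_ge0.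
apply: mxle_trans hG; apply: G_mono => //; exact: Xit_nn.
Qed.

Lemma G_rows Y : mx_nonneg Y -> mxle (Y *m e q) (e p) -> mxle (G Y *m e q) (e p *+ 2).
Proof.
move=> hY hr; rewrite /G !mulmxDl -!mulmxA.
apply: (@mxle_trans _ _ _ _ (Ppm *m e q + Y *m (Pmm *m e q) + Ppp *m e p
   + Y *m (Pmp *m e p))).
  apply: mxle_add; last by move: (mxle_mull (mxnn_mul hY Pmp_nn) hr); rewrite -!mulmxA.
  apply: mxle_add; last exact: mxle_mull Ppp_nn hr.
  exact: mxle_refl.
have -> : Ppm *m e q + Y *m (Pmm *m e q) + Ppp *m e p + Y *m (Pmp *m e p)
  = (Ppp *m e p + Ppm *m e q) + Y *m (Pmp *m e p + Pmm *m e q).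
  rewrite mulmxDr. move: (Ppm *m e q) (Y *m (Pmm *m e q)) (Ppp *m e p) (Y *m (Pmp *m e p)).
  by move=> a b c d; apply/matrixP => i j; rewrite !mxE; lra.
rewrite rows_p rows_m mulr2n; apply: mxle_add => //; exact: mxle_refl.
Qed.

Lemma Xit_rows k : mxle (Xit k *m e q) (e p).
Proof.
elim: k => [|k IH] /=.
  by move=> i j; rewrite mul0mx !mxE.
rewrite -scalemxAl -(half2 (e p)); apply: mxle_scale; first by rewrite invr_ge0.
apply: G_rows => //; exact: Xit_nn.
Qed.


Lemma G_cvg X L : mxcvg X L -> mxcvg (fun k => G (X k)) (G L).
Proof.
move=> h; rewrite /G.
apply: mxcvg_add; last by apply: mxcvg_mul => //; apply: mxcvg_mul => //; exact: mxcvg_cst.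
apply: mxcvg_add; last by apply: mxcvg_mul => //; exact: mxcvg_cst.
apply: mxcvg_add; first exact: mxcvg_cst.
by apply: mxcvg_mul => //; exact: mxcvg_cst.
Qed.

Lemma Psi_nn : mx_nonneg Psi.
Proof. by case: hmin. Qed.

Lemma Psi_sol : G Psi = Psi *+ 2.
Proof. by case: hmin => /ricE. Qed.

Lemma Xlim : exists Xl, [/\ G Xl = Xl *+ 2, mx_nonneg Xl, mxle (Xl *m e q) (e p)
  & forall Y, mx_nonneg Y -> mxle (G Y) (Y *+ 2) -> mxle Xl Y].
Proof.
have [Xl hX] := mxcvg_mono Xit_inc (fun k => Xit_below k Psi_nn (eq_mxle Psi_sol)).
exists Xl; split.
- have h1 := mxcvg_shiftS' hX.
  have h2 : mxcvg (fun k => Xit k.+1) (2^-1 *: G Xl).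
    by apply: mxcvg_scale; exact: G_cvg.
  have E := mxcvg_uniq h1 h2.
  by rewrite {2}E -[_ *+ 2]scaler_nat scalerA divff ?scale1r // pnatr_eq0.
- by apply/mxle0; apply: mxcvg_ge hX _ => k; apply/mxle0; exact: Xit_nn.
- apply: (mxcvg_le (X := fun k => Xit k *m e q)); last exact: Xit_rows.
  apply: mxcvg_mul => //; exact: mxcvg_cst.
- by move=> Y hY hG; apply: mxcvg_le hX _ => k; exact: Xit_below.
Qed.



Lemma Psi_rows : mxle (Psi *m e q) (e p).
Proof.
have [Xl [hG hn hr _]] := Xlim.
case: hmin => _ _ /(_ Xl) hm.
have hPX : mxle Psi Xl by move=> i j; apply: hm => //; exact/ricE.
apply: mxle_trans hr; apply: mxle_mulr => // i j; rewrite mxE.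
by [].
Qed.

Definition Q := Pmm + Pmp *m Psi.
Definition V2 := 1%:M *+ 2 - Q.

Lemma Q_nn : mx_nonneg Q.
Proof. apply: mxnn_add; [exact: Pmm_nn | exact: mxnn_mul Pmp_nn Psi_nn]. Qed.

Lemma Q_rows : mxle (Q *m e q) (e q).
Proof.
rewrite -{2}rows_m /Q mulmxDl addrC -mulmxA; apply: mxle_add.
  exact: mxle_mull Pmp_nn Psi_rows.
exact: mxle_refl.
Qed.

Lemma Mmx k (Z : 'M[R]_(q, k)) : mx_nonneg (V2 *m Z) -> mx_nonneg Z.
Proof.
move=> h i j.
case: (@arg_minP _ _ _ i xpredT (fun l => Z l j) isT) => i1 _ hmin1.
apply: le_trans (hmin1 i isT).
have := h i1 j; rewrite /V2 mulmxBl mulr2n mulmxDl mul1mx !mxE.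
set z := Z i1 j.
have hr := Q_rows i1 ord0; rewrite !mxE in hr.
rewrite /e in hr; rewrite (eq_bigr (fun l => Q i1 l)) in hr; last by move=> l _; rewrite [const_mx _ _ _]mxE mulr1.
move=> hs.
have hS : z * (\sum_l Q i1 l) <= \sum_l Q i1 l * Z l j.
  rewrite mulr_sumr; apply: ler_sum => l _; rewrite mulrC ler_wpM2l //; last exact: hmin1.
  exact: Q_nn.
have r0 : 0 <= \sum_l Q i1 l by apply: sumr_ge0 => l _; exact: Q_nn.
move: hs hS hr r0; set S := \sum_l Q i1 l * Z l j; set r := \sum_l Q i1 l.
move=> *; nra.
Qed.


Lemma V2_unit : V2 \in unitmx.
Proof.
rewrite -unitmx_tr -row_free_unit -kermx_eq0.
set K := kermx V2^T.
have hK : V2 *m K^T = 0.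
  have : (K *m V2^T)^T = 0 by rewrite mulmx_ker trmx0.
  by rewrite trmx_mul trmxK.
have n1 : mx_nonneg K^T by apply: Mmx; rewrite hK; exact: mxnn0.
have n2 : mx_nonneg (- K^T) by apply: Mmx; rewrite mulmxN hK oppr0; exact: mxnn0.
apply/eqP/matrixP => i j; have := n1 j i; have := n2 j i; rewrite !mxE; lra.
Qed.

Definition W := invmx V2.

Lemma W_nn : mx_nonneg W.
Proof.
apply: Mmx; rewrite /W mulmxV; last exact: V2_unit.
by move=> i j; rewrite mxE ler0n.
Qed.

Lemma V2E : 1%:M - lambda^-1 *: (drsubmx T + dlsubmx T *m Psi) = V2.
Proof.
rewrite /V2 /Q Pmm_E Pmp_E scalerDr -scalemxAl.
move: (lambda^-1 *: drsubmx T) (lambda^-1 *: (dlsubmx T *m Psi)) => a b.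
by apply/matrixP => i j; rewrite !mxE; lra.
Qed.

Lemma Psi_V2 : Psi *m V2 = Ppm + Ppp *m Psi.
Proof.
have h := Psi_sol; rewrite /G in h.
rewrite /V2 /Q mulmxBr mulr2n mulmxDr mulmx1 mulmxDr mulmxA.
move: h; move: (Psi *m Pmm) (Ppp *m Psi) (Psi *m Pmp *m Psi) => a b c h.
apply/matrixP => i j; move/matrixP: h => /(_ i j); rewrite !mxE; lra.
Qed.

Lemma Psi_fix : Psi = Ppm *m W + Ppp *m Psi *m W.
Proof. by rewrite -mulmxDl -Psi_V2 /W mulmxK // V2_unit. Qed.


Lemma expnn n (A : 'M[R]_n) k : mx_nonneg A -> mx_nonneg (A ^+ k).
Proof.
move=> hA; elim: k => [|k IH].
  by rewrite expr0 => i j; rewrite mxE ler0n.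
by rewrite exprS -mulmxE; exact: mxnn_mul.
Qed.

Definition hmat n : 'M[R]_(p, q) :=
  match n with m.+2 => if odd m then 0 else Ppp ^+ (m./2) *m Ppm *m W ^+ (m./2).+1
  | _ => 0 end.

Lemma hmat_nn n : mx_nonneg (hmat n).
Proof.
case: n => [|[|m]] /=; try exact: mxnn0.
case: ifP => _; first exact: mxnn0.
apply: mxnn_mul; last exact: expnn W_nn.
apply: mxnn_mul; [exact: expnn Ppp_nn | exact: Ppm_nn].
Qed.

Lemma hmat_rec n : hmat n.+3 = Ppp *m hmat n.+1 *m W.
Proof.
case: n => [|k] /=; first by rewrite mulmx0 mul0mx.
rewrite negbK; case: ifP => _; first by rewrite mulmx0 mul0mx.
by rewrite exprS exprSr -!mulmxE !mulmxA.
Qed.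

Lemma hmat2 : hmat 2 = Ppm *m W.
Proof. by rewrite /= expr0 expr1 mul1mx. Qed.

Definition H N := \sum_(n < N) hmat n.

Lemma H_rec N : H N.+3 = Ppp *m H N.+1 *m W + Ppm *m W.
Proof.
have h0 : hmat 0 = 0 by []. have h1 : hmat 1 = 0 by [].
rewrite /H !big_ord_recl !lift0 h0 h1 hmat2 !add0r addrC; congr (_ + _).
rewrite mulmx_sumr mulmx_suml; apply: eq_bigr => i _.
by rewrite hmat_rec.
Qed.

Lemma H_inc N : mxle (H N) (H N.+1).
Proof.
rewrite /H big_ord_recr /= => i j; rewrite mxE lerDl; exact: hmat_nn.
Qed.

Lemma H_nn N : mx_nonneg (H N).
Proof.
by rewrite /H => i j; rewrite summxE; apply: sumr_ge0 => n _; exact: hmat_nn.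
Qed.

Lemma H_le N : mxle (H N) Psi.
Proof.
have H0 : H 0 = 0 by rewrite /H big_ord0.
have H1 : H 1 = 0 by rewrite /H big_ord1.
have H2 : H 2 = 0 by rewrite /H !big_ord_recl big_ord0 /= !addr0.
suff : mxle (H N) Psi /\ mxle (H N.+1) Psi by case.
elim: N => [|N [IH0 IH]].
  by rewrite H0 H1; split; apply/mxle0; exact: Psi_nn.
split => //; case: N IH0 IH => [|M] IH0 IH.
  by rewrite H2; apply/mxle0; exact: Psi_nn.
rewrite H_rec [X in mxle _ X]Psi_fix addrC; apply: mxle_add; first exact: mxle_refl.
apply: mxle_mulr; last exact: W_nn.
exact: mxle_mull Ppp_nn IH0.
Qed.

Lemma H_cvg : mxcvg H Psi.
Proof.
have [S hS] := mxcvg_mono H_inc H_le.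
have S_le : mxle S Psi by apply: mxcvg_le hS H_le.
have S_nn : mx_nonneg S.
  by apply/mxle0; apply: mxcvg_ge hS _ => k; apply/mxle0; exact: H_nn.
have S_fix : S = Ppp *m S *m W + Ppm *m W.
  have h1 : mxcvg (fun N => H N.+3) S by move: (mxcvg_shiftS' (mxcvg_shiftS' (mxcvg_shiftS' hS))).
  have h2 : mxcvg (fun N => H N.+3) (Ppp *m S *m W + Ppm *m W).
    have -> : (fun N => H N.+3) = (fun N => Ppp *m H N.+1 *m W + Ppm *m W).
      by apply/funext => N; rewrite H_rec.
    apply: mxcvg_add; last exact: mxcvg_cst.
    apply: mxcvg_mul; last exact: mxcvg_cst.
    apply: mxcvg_mul; first exact: mxcvg_cst.
    exact: mxcvg_shiftS'.
  exact: mxcvg_uniq h1 h2.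
have S_V2 : S *m V2 = Ppp *m S + Ppm.
  by rewrite {1}S_fix mulmxDl /W !mulmxKV // V2_unit.
have S_sup : mxle (G S) (S *+ 2).
  have E : G S + S *m Pmp *m (Psi - S) = S *+ 2.
    move: S_V2; rewrite /G /V2 /Q mulmxBr mulr2n mulmxDr mulmx1 mulmxDr mulmxA.
    rewrite [S *m Pmp *m (Psi - S)]mulmxBr.
    move: (S *m Pmm) (Ppp *m S) (S *m Pmp *m Psi) (S *m Pmp *m S) => a b c d h.
    apply/matrixP => i j; move/matrixP: h => /(_ i j); rewrite !mxE; lra.
  have nn : mx_nonneg (S *m Pmp *m (Psi - S)).
    apply: mxnn_mul; first exact: mxnn_mul S_nn Pmp_nn.
    by move=> i j; rewrite !mxE subr_ge0; exact: S_le.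
  move=> i j; rewrite -E [in X in _ <= X]mxE. rewrite lerDl; exact: nn.
have [Xl [hG hn hr hbelow]] := Xlim.
have hPX : mxle Psi Xl.
  by case: hmin => _ _ /(_ Xl) hm i j; apply: hm => //; exact/ricE.
have -> : Psi = S.
  apply: mxle_antisym => //; apply: mxle_trans hPX _; exact: hbelow.
exact: hS.
Qed.


Definition Am1 : 'M[R]_(p + q) := block_mx 0 0 0 W.
Definition A0 : 'M[R]_(p + q) := block_mx 0 Ppm 0 0.
Definition A1 : 'M[R]_(p + q) := block_mx Ppp 0 0 0.

Ltac blk := rewrite ?mulmx_block ?mulmx0 ?mul0mx ?addr0 ?add0r ?block_mx0.

Lemma z10 : A1 *m Am1 = 0. Proof. by rewrite /A1 /Am1; blk. Qed.
Lemma z01 : A0 *m A1 = 0. Proof. by rewrite /A1 /A0; blk. Qed.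
Lemma z00 : A0 *m A0 = 0. Proof. by rewrite /A0; blk. Qed.
Lemma zm1 : Am1 *m A1 = 0. Proof. by rewrite /A1 /Am1; blk. Qed.
Lemma zm0 : Am1 *m A0 = 0. Proof. by rewrite /A0 /Am1; blk. Qed.

Notation path := (path_mx Am1 A0 A1).

Lemma pathB c (B : 'M[R]_(p, q)) :
  (block_mx 0 B 0 0 : 'M[R]_(p + q)) *m path (nseq c o0)
  = block_mx 0 (B *m W ^+ c) 0 0 :> 'M[R]_(p + q).
Proof.
elim: c B => [|c IH] B; first by rewrite /= mulmx1 expr0 mulmx1.
rewrite [nseq _ _]/= [path _]/= mulmxA.
have -> : (block_mx 0 B 0 0 : 'M[R]_(p + q)) *m qbd_step Am1 A0 A1 o0
   = block_mx 0 (B *m W) 0 0 :> 'M[R]_(p + q).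
  by rewrite /= /Am1; blk.
by rewrite IH exprS -mulmxE mulmxA.
Qed.

Lemma pathG a c : path (nseq a o2 ++ o1 :: nseq c o0)
  = block_mx 0 (Ppp ^+ a *m Ppm *m W ^+ c) 0 0 :> 'M[R]_(p + q).
Proof.
elim: a => [|a IH].
  by rewrite /= expr0 mul1mx -pathB.
rewrite [nseq _ _ ++ _]/= [path (_ :: _)]/= IH.
have -> : qbd_step Am1 A0 A1 o2 = A1 by [].
by rewrite /A1; blk; rewrite exprS -mulmxE !mulmxA.
Qed.

Lemma fpE n : first_passage_mx Am1 A0 A1 n =
  block_mx 0 (hmat n) 0 (if n == 1%N then W else 0).
Proof.
have Hn := fp_none _ _ _ _ _ z10 z01 z00 zm1 zm0.
have Hs := fp_some _ _ _ _ _ z10 z01 z00 zm1 zm0.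
case: n => [|[|m]].
- by rewrite Hn // block_mx0.
- rewrite (Hs 1%N [:: o0]) //= mulmx1 /Am1.
  by [].
- case hm : (odd m).
  + by rewrite Hn /= ?hm // block_mx0.
  + rewrite (Hs _ (t0 m./2)) /= ?hm // /t0 pathG.
    by [].
Qed.

Definition D N := \sum_(n < N) (if nat_of_ord n == 1%N then W else 0).

Lemma sum_fpE N : \sum_(n < N) first_passage_mx Am1 A0 A1 n = block_mx 0 (H N) 0 (D N).
Proof.
elim: N => [|N IH].
  by rewrite /H /D !big_ord0 block_mx0.
by rewrite /H /D !big_ord_recr /= -/(H N) -/(D N) IH fpE add_block_mx !addr0.
Qed.

Lemma D_cvg : mxcvg D W.
Proof.
apply: mxcvg_shiftS; apply: mxcvg_shiftS.
have -> : (fun t => D t.+2) = (fun=> W).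
  apply/funext => t; rewrite /D !big_ord_recl /= big1 ?addr0 ?add0r //.
exact: mxcvg_cst.
Qed.

Lemma G_matrix : is_G_matrix Am1 A0 A1 (block_mx 0 Psi 0 W).
Proof.
move=> i j.
have -> : (fun N => \sum_(n < N) first_passage_mx Am1 A0 A1 n i j)
   = (fun N => block_mx 0 (H N) 0 (D N) i j).
  by apply/funext => N; rewrite -sum_fpE summxE.
apply: (mxcvg_block (X1 := fun=> 0) (X3 := fun=> 0)); try exact: mxcvg_cst.
  exact: H_cvg.
exact: D_cvg.
Qed.

End Main.

Theorem lemma1 (R : realType) (p q : nat) (T : 'M[R]_(p + q))
  (Psi : 'M[R]_(p, q)) (lambda : R) :
  (0 < p)%N -> (0 < q)%N ->
  is_generator T ->
  is_min_nonneg_sol (@riccati R p q T) Psi ->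
  0 < lambda -> (forall i, `|T i i| <= lambda) ->
  let U : 'M[R]_q := drsubmx T + dlsubmx T *m Psi in
  let P : 'M[R]_(p + q) := 1%:M + lambda^-1 *: T in
  let V : 'M[R]_q := 1%:M - lambda^-1 *: U in
  let Am1 : 'M[R]_(p + q) := block_mx 0 0 0 (invmx V) in
  let A0 : 'M[R]_(p + q) := block_mx 0 (ursubmx P) 0 0 in
  let A1 : 'M[R]_(p + q) := block_mx (ulsubmx P) 0 0 0 in
  V \in unitmx /\ is_G_matrix Am1 A0 A1 (block_mx 0 Psi 0 (invmx V)).
Proof.
move=> hp hq hgen hmin hl hdiag U P0 V Am1' A0' A1'.
have EV : V = V2 T Psi lambda by exact: V2E.
have hu := V2_unit hgen hmin hl hdiag.
split; first by rewrite EV.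
have := G_matrix hgen hmin hl hdiag.
by rewrite /Am1' /A0' /A1' /P0 /W /Am1 /A0 /A1 /Ppm /Ppp /P EV.
Qed.
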